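(* Let $\lambda=[2,2,2,2]$ and $\mu=[4,1,1,1,1,1,1,1,1]$ (one entry $4$ and eight entries $1$). Then $\lambda$ stably embeds into $\mu$ (indeed $\lambda\times\nu\hookrightarrow\mu\times\nu$ for $\nu=[2,1,1]$), but $\mu$ does not supermajorize $\lambda$ and $\lambda$ does not embed into $\mu$.
   Context: Partitions are finite nonincreasing sequences of positive integers. The product $\lambda\times\nu$ is the partition of all products $\lambda_i\nu_j$, reordered nonincreasingly. $\lambda=[\lambda_1,\ldots,\lambda_m]$ embeds into $\mu=[\mu_1,\ldots,\mu_n]$, written $\lambda\hookrightarrow\mu$, if there is a map $\varphi:\{1,\ldots,m\}\to\{1,\ldots,n\}$ with $\sum_{i\in\varphi^{-1}(j)}\lambda_i\le\mu_j$ for all $j$. $\lambda$ stably embeds into $\mu$ if there is a partition $\nu$ with $\lambda\times\nu\hookrightarrow\mu\times\nu$. $\mu$ supermajorizes $\lambda$ (written $\lambda\preccurlyeq_S\mu$) if for every $x\in\mathbb N$, $\sum_{\lambda_i\ge x}\lambda_i\le\sum_{\mu_j\ge x}\mu_j$. *)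

(* Defs.v *)
From mathcomp Require Import all_boot.
Set Implicit Arguments. Unset Strict Implicit. Unset Printing Implicit Defensive.

Definition is_partition (s : seq nat) : bool :=
  sorted geq s && all (fun x => 0 < x) s.

Definition pprod (lam nu : seq nat) : seq nat :=
  sort geq [seq x * y | x <- lam, y <- nu].

Definition embeds (lam mu : seq nat) : Prop :=
  exists phi : 'I_(size lam) -> 'I_(size mu),
    forall j : 'I_(size mu),
      \sum_(i : 'I_(size lam) | phi i == j) nth 0 lam i <= nth 0 mu j.

Definition stably_embeds (lam mu : seq nat) : Prop :=
  exists nu : seq nat, is_partition nu /\ embeds (pprod lam nu) (pprod mu nu).

Definition supermajorizes (mu lam : seq nat) : Prop :=
  forall x : nat,
    \sum_(a <- lam | x <= a) a <= \sum_(b <- mu | x <= b) b.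

(* Main.v *)
Require Import Defs.
From mathcomp Require Import all_boot.

Definition phiL : seq nat := [:: 0; 0; 1; 2; 3; 4; 5; 6; 7; 8; 9; 10].

Lemma emb : embeds (pprod [:: 2; 2; 2; 2] [:: 2; 1; 1]) (pprod [:: 4; 1; 1; 1; 1; 1; 1; 1; 1] [:: 2; 1; 1]).
Proof.
set L := pprod _ _; set M := pprod _ _.
have sM : size M = 27 by vm_compute.
have sL : size L = 12 by vm_compute.
have hphi : forall i, nth 0 phiL i < (size M).-1.+1.
  by move=> i; rewrite sM; case: i => [|[|[|[|[|[|[|[|[|[|[|[|i]]]]]]]]]]]] //; rewrite nth_default.
exists (fun i => inord (nth 0 phiL i)) => j.
rewrite (eq_bigl (fun i : 'I_(size L) => nth 0 phiL i == j)); last first.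
  move=> i /=; apply/eqP/eqP => [<-|h]; first by rewrite inordK.
  apply: val_inj => /=; rewrite inordK //.
pose F := fun (i : nat) => nth 0 L i.
rewrite -(big_mkord (fun i => nth 0 phiL i == j) F).
have : all (fun j => \sum_(0 <= i < size L | nth 0 phiL i == j) F i <= nth 0 M j) (iota 0 (size M)).
  rewrite unlock; vm_cast_no_check (erefl true).
move/allP => /(_ j); apply; rewrite mem_iota /=; exact: ltn_ord.
Qed.

Theorem mainTheorem5 :
  let lam := [:: 2; 2; 2; 2] in
  let mu := [:: 4; 1; 1; 1; 1; 1; 1; 1; 1] in
  is_partition lam /\ is_partition mu /\
  stably_embeds lam mu /\
  embeds (pprod lam [:: 2; 1; 1]) (pprod mu [:: 2; 1; 1]) /\
  ~ supermajorizes mu lam /\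
  ~ embeds lam mu.
Proof.
move=> lam mu.
split; first by [].
split; first by [].
split; first by exists [:: 2; 1; 1]; split; [by [] | exact: emb].
split; first exact: emb.
split; first by move=> /(_ 2); rewrite !big_cons !big_nil.
move=> [phi H].
have H0 : forall i, phi i = ord0 :> 'I_9.
  move=> i; apply/eqP; apply/negPn/negP => ne.
  have := H (phi i).
  rewrite (bigD1 i) //=.
  case: (phi i) ne => [[|k] Hk] //= _.
  have -> : nth 0 lam i = 2 by case: i => [[|[|[|[|]]]] ?].
  by case: k Hk => [|[|[|[|[|[|[|[|]]]]]]]].
have := H ord0.
rewrite (eq_bigl xpredT); last by move=> i; rewrite H0 eqxx.
rewrite (eq_bigr (fun _ => 2)); last by case=> [[|[|[|[|]]]] ?].
by rewrite sum_nat_const card_ord.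
Qed.
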